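(* Let $I=I_{\mathbf a,\mathbf b}\subset S=K[x,y]$ be a nonzero proper monomial ideal. Then $$\mathrm{v}(I)=\begin{cases}\min\{a_i+b_{i+1}-2: 1\le i\le m-1\}, & \text{if } b_1=0 \text{ and } a_m=0,\\ \min\{a_1+b_1-1,\ a_i+b_{i+1}-2: 1\le i\le m-1\}, & \text{if } b_1\ne0\text{ and } a_m=0,\\ \min\{a_m+b_m-1,\ a_i+b_{i+1}-2: 1\le i\le m-1\}, & \text{if } b_1=0\text{ and } a_m\ne0,\\ \min\{a_1+b_1-1,\ a_m+b_m-1,\ a_i+b_{i+1}-2: 1\le i\le m-1\}, & \text{otherwise}.\end{cases}$$ (When $m=1$ the terms $a_i+b_{i+1}-2$ are absent.)
   Context: $S=K[x,y]$ over a field $K$, standard graded, $S_d$ its degree-$d$ component. Every nonzero monomial ideal $I$ of $S$ has minimal monomial generating set $\{x^{a_1}y^{b_1},\dots,x^{a_m}y^{b_m}\}$ with $a_1>\dots>a_m\ge0$ and $0\le b_1<\dots<b_m$; this is denoted $I=I_{\mathbf a,\mathbf b}$. For a graded ideal $J$, $\mathrm{v}(J)=\min\{d:\exists f\in S_d\text{ with }(J:f)\in\operatorname{Ass}(J)\}$. *)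

(* Defs.v *)
From HB Require Import structures.
From mathcomp Require Import all_boot all_order all_algebra.
From mathcomp Require Import mpoly.

Set Implicit Arguments.
Unset Strict Implicit.
Unset Printing Implicit Defensive.

Import GRing.Theory.
Local Open Scope ring_scope.

(* S = K[x,y] is {mpoly K[2]}; x = 'X_0, y = 'X_1.  Ideals are predicates. *)

Definition varx (K : fieldType) : {mpoly K[2]} := 'X_(@Ordinal 2 0 isT).
Definition vary (K : fieldType) : {mpoly K[2]} := 'X_(@Ordinal 2 1 isT).

Definition monoXY (K : fieldType) (a b : nat) : {mpoly K[2]} :=
  varx K ^+ a * vary K ^+ b.

Definition ideal_gen (K : fieldType) (s : seq {mpoly K[2]}) (g : {mpoly K[2]}) : Prop :=
  exists c : 'I_(size s) -> {mpoly K[2]},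
    g = \sum_(i < size s) c i * nth 0 s i.

Definition monideal (K : fieldType) (a b : seq nat) : {mpoly K[2]} -> Prop :=
  ideal_gen [seq monoXY K (nth 0%N a i) (nth 0%N b i) | i <- iota 0 (size a)].

Definition colon (K : fieldType) (J : {mpoly K[2]} -> Prop) (f : {mpoly K[2]})
  : {mpoly K[2]} -> Prop := fun g => J (g * f).

Definition is_ideal (K : fieldType) (P : {mpoly K[2]} -> Prop) : Prop :=
  P 0 /\ (forall g h, P g -> P h -> P (g + h)) /\ (forall r g, P g -> P (r * g)).

Definition is_prime_ideal (K : fieldType) (P : {mpoly K[2]} -> Prop) : Prop :=
  is_ideal P /\ ~ P 1 /\ (forall g h, P (g * h) -> P g \/ P h).

Definition is_assoc (K : fieldType) (J P : {mpoly K[2]} -> Prop) : Prop :=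
  is_prime_ideal P /\ exists g, forall h, P h <-> colon J g h.

Definition vnumber_is (K : fieldType) (J : {mpoly K[2]} -> Prop) (v : nat) : Prop :=
  (exists f : {mpoly K[2]}, f \is v.-homog /\ is_assoc J (colon J f)) /\
  (forall (d : nat) (f : {mpoly K[2]}), f \is d.-homog -> is_assoc J (colon J f) -> (v <= d)%N).

Definition seqmin (s : seq nat) : nat := foldr minn (head 0%N s) s.

(* candidate values of the theorem (0-indexed: a_i = nth 0 a (i-1)) *)
Definition vcands (a b : seq nat) : seq nat :=
  let m := size a in
  (if nth 0%N b 0 != 0%N then [:: nth 0%N a 0 + nth 0%N b 0 - 1]%N else [::]) ++
  (if nth 0%N a m.-1 != 0%N then [:: nth 0%N a m.-1 + nth 0%N b m.-1 - 1]%N else [::]) ++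
  [seq (nth 0%N a i + nth 0%N b i.+1 - 2)%N | i <- iota 0 m.-1].

(* Main.v *)
Require Import Defs.
From HB Require Import structures.
From mathcomp Require Import all_boot all_order all_algebra.
From mathcomp Require Import mpoly.
From mathcomp Require Import zify.
Set Implicit Arguments.
Unset Strict Implicit.
Unset Printing Implicit Defensive.
Import GRing.Theory.
Local Open Scope ring_scope.

Definition i0 : 'I_2 := @Ordinal 2 0 isT.
Definition i1 : 'I_2 := @Ordinal 2 1 isT.
Definition mxy (p q : nat) : 'X_{1..2} := [multinom (if val i == 0%N then p else q) | i < 2].
Lemma mxy0 p q : mxy p q i0 = p. Proof. by rewrite mnmE. Qed.
Lemma mxy1 p q : mxy p q i1 = q. Proof. by rewrite mnmE. Qed.
Lemma mnm2P (m1 m2 : 'X_{1..2}) : m1 i0 = m2 i0 -> m1 i1 = m2 i1 -> m1 = m2.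
Proof. move=> h0 h1; apply/mnmP; case=> [[|[|//]] H]. 
  by rewrite (_ : Ordinal H = i0) //; apply: val_inj.
by rewrite (_ : Ordinal H = i1) //; apply: val_inj.
Qed.
Lemma mdeg2 (m : 'X_{1..2}) : mdeg m = (m i0 + m i1)%N.
Proof. rewrite mdegE big_ord_recr big_ord_recr big_ord0 /=.
by rewrite (_ : ord_max = i1); [rewrite (_ : widen_ord _ ord_max = i0) | apply: val_inj] => //; apply: val_inj.
Qed.
Lemma monoXYE (K : fieldType) p q : monoXY K p q = 'X_[mxy p q].
Proof.
rewrite /monoXY /varx /vary !mpolyXn -mpolyXD; congr 'X_[_].
by apply: mnm2P; rewrite mnmDE !mulmnE !mnm1E ?mxy0 ?mxy1 /= ?mul1n ?mul0n ?addn0.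
Qed.
Section IG.
Variable K : fieldType.
Implicit Types (s : seq {mpoly K[2]}) (g h r : {mpoly K[2]}).
Lemma ig0 s : ideal_gen s 0.
Proof. by exists (fun _ => 0); rewrite big1 // => i _; rewrite mul0r. Qed.
Lemma igD s g h : ideal_gen s g -> ideal_gen s h -> ideal_gen s (g + h).
Proof. by move=> [c ->] [d ->]; exists (fun i => c i + d i); rewrite -big_split; apply: eq_bigr => i _; rewrite mulrDl. Qed.
Lemma igM s r g : ideal_gen s g -> ideal_gen s (r * g).
Proof. by move=> [c ->]; exists (fun i => r * c i); rewrite mulr_sumr; apply: eq_bigr => i _; rewrite mulrA. Qed.
Lemma igX s j : (j < size s)%N -> ideal_gen s (nth 0 s j).
Proof.
move=> hj; exists (fun i => ((val i == j)%:R)).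
rewrite (bigD1 (Ordinal hj)) //= eqxx mul1r big1 ?addr0 // => i hi.
have -> : (val i == j) = false by apply/negbTE; apply: contra hi => /eqP h; apply/eqP/val_inj.
by rewrite mul0r.
Qed.
Lemma igsum s (I : Type) (rr : seq I) (P : pred I) (F : I -> {mpoly K[2]}) :
  (forall i, P i -> ideal_gen s (F i)) -> ideal_gen s (\sum_(i <- rr | P i) F i).
Proof. move=> H; apply: (big_ind (ideal_gen s)); [exact: ig0 | exact: igD | by []]. Qed.
End IG.

Section Mon.
Variables (K : fieldType) (a b : seq nat).
Local Notation J := (@monideal K a b).
Definition inI (m : 'X_{1..2}) : bool :=
  has (fun k => (nth 0%N a k <= m i0) && (nth 0%N b k <= m i1))%N (iota 0 (size a)).
Definition memI (g : {mpoly K[2]}) := all inI (msupp g).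

Lemma inIP (m : 'X_{1..2}) : reflect (exists2 k, (k < size a)%N & (nth 0%N a k <= m i0 /\ nth 0%N b k <= m i1)%N) (inI m).
Proof.
apply: (iffP hasP) => [[k] | [k]].
  by rewrite mem_iota add0n => hk /andP [h1 h2]; exists k.
by move=> hk [h1 h2]; exists k; rewrite ?mem_iota ?add0n ?h1 ?h2.
Qed.

Lemma inI_mono (m d : 'X_{1..2}) : inI m -> inI (m + d).
Proof.
move/inIP => [k hk [h1 h2]]; apply/inIP; exists k => //.
by rewrite !mnmDE; split; lia.
Qed.

Let gens := [seq monoXY K (nth 0%N a i) (nth 0%N b i) | i <- iota 0 (size a)].

Lemma nth_gens i : (i < size a)%N -> nth 0 gens i = 'X_[mxy (nth 0%N a i) (nth 0%N b i)].
Proof.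
move=> hi; rewrite /gens (nth_map 0%N) ?size_iota // nth_iota // add0n.
by rewrite monoXYE.
Qed.

Lemma memI0 : memI 0.
Proof. rewrite /memI; have -> : msupp (0 : {mpoly K[2]}) = [::] by apply/eqP; rewrite msupp_eq0.
by []. Qed.
Lemma memID g h : memI g -> memI h -> memI (g + h).
Proof.
move=> /allP hg /allP hh; apply/allP => m /msuppD_le; rewrite mem_cat => /orP [].
  exact: hg. exact: hh.
Qed.

Lemma memIMX g e : memI (g * 'X_[e]) = all (fun m => inI (e + m)) (msupp g).
Proof. by rewrite /memI (perm_all _ (msuppMX _ _)) all_map. Qed.

Lemma J_memI g : J g -> memI g.
Proof.
case=> c ->; apply: (big_ind memI); [exact: memI0 | exact: memID | ].
move=> i _; have hi : (i < size a)%N by have := ltn_ord i; rewrite [X in (_ < X)%N -> _]size_map size_iota.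
rewrite -/gens nth_gens // memIMX; apply/allP => m _; apply: inI_mono.
by apply/inIP; exists i => //; rewrite mxy0 mxy1.
Qed.

Lemma memI_J g : memI g -> J g.
Proof.
move=> /allP hg; rewrite (mpolyE g) big_seq /monideal; apply: igsum => m hm.
have /inIP [k hk [h1 h2]] := hg m hm.
set e := mxy (nth 0%N a k) (nth 0%N b k).
have -> : m = (mxy (m i0 - nth 0%N a k) (m i1 - nth 0%N b k) + e)%MM.
  by apply: mnm2P; rewrite mnmDE ?mxy0 ?mxy1; lia.
rewrite mpolyXD scalerAl; apply: igM.
rewrite -nth_gens //; apply: igX; by rewrite /gens size_map size_iota.
Qed.
End Mon.
Section Proj.
Variable K : fieldType.
Variable Z : pred 'X_{1..2}.
Hypothesis ZD : forall m1 m2 : 'X_{1..2}, Z (m1 + m2)%MM = Z m1 && Z m2.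
Hypothesis Z0 : Z 0%MM.

Definition proj (g : {mpoly K[2]}) : {mpoly K[2]} :=
  \sum_(m : 'X_{1..2 < msize g}) ((if Z m then g@_m else 0) *: 'X_[m]).

Lemma projE g m : (proj g)@_m = if Z m then g@_m else 0.
Proof.
case: (ltnP (mdeg m) (msize g)) => h; first by rewrite /proj (mcoeff_mpoly (fun m : 'X_{1..2} => if Z m then g@_m else 0)).
have -> : g@_m = 0 by apply/eqP; rewrite mcoeff_eq0 msize_mdeg_ge.
rewrite if_same /proj raddf_sum big1 //= => i _; rewrite mcoeffZ mcoeffX.
have -> : (val i == m) = false.
  apply/negbTE; apply/eqP => e; have := bmdeg i; rewrite e; lia.
by rewrite mulr0.
Qed.

Lemma projM g h : proj (g * h) = proj g * proj h.
Proof.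
apply/mpolyP => m; rewrite projE !mcoeffM.
case Zm: (Z m).
  apply: eq_bigr => k /eqP e; rewrite !projE.
  by rewrite e ZD in Zm; case/andP: Zm => -> ->.
rewrite big1 // => k /eqP e; rewrite !projE.
rewrite e ZD in Zm; move: Zm; case: (Z k.1); case: (Z k.2) => //= _; by rewrite ?mul0r ?mulr0.
Qed.

Lemma proj0P g : proj g = 0 <-> all (fun m => ~~ Z m) (msupp g).
Proof.
split.
  move=> h; apply/allP => m; rewrite mcoeff_msupp; apply: contra => Zm.
  by move/mpolyP: h => /(_ m); rewrite projE Zm mcoeff0 => ->.
move/allP => h; apply/mpolyP => m; rewrite projE mcoeff0; case Zm: (Z m) => //.
by apply/eqP; rewrite mcoeff_eq0; apply/negP => /h; rewrite Zm.
Qed.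

Lemma proj_prime g h : proj (g * h) = 0 -> proj g = 0 \/ proj h = 0.
Proof. by rewrite projM => /eqP; rewrite mulf_eq0 => /orP [] /eqP; [left|right]. Qed.

Lemma proj1 : proj 1 <> 0.
Proof. by move/mpolyP => /(_ 0%MM); rewrite projE Z0 mcoeff1 eqxx mcoeff0 => /eqP; rewrite oner_eq0. Qed.
End Proj.
Lemma foldr_min_le z (s : seq nat) x : x \in s -> (foldr minn z s <= x)%N.
Proof.
elim: s => //= y s IH; rewrite in_cons => /orP [/eqP -> | /IH h].
  exact: geq_minl.
by rewrite geq_min h orbT.
Qed.
Lemma foldr_min_mem z (s : seq nat) : foldr minn z s \in z :: s.
Proof.
elim: s => /= [|y s IH]; first by rewrite inE.
rewrite /minn; case: ltnP => _; first by rewrite !inE eqxx orbT.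
move: IH; rewrite !inE => /orP [->|->] //; by rewrite !orbT.
Qed.
Lemma seqmin_le (s : seq nat) x : x \in s -> (seqmin s <= x)%N.
Proof. exact: foldr_min_le. Qed.
Lemma seqmin_mem (s : seq nat) : s != [::] -> seqmin s \in s.
Proof.
case: s => // h t _; have := foldr_min_mem h (h :: t); rewrite /seqmin /=.
by rewrite in_cons => /orP [/eqP ->|]; [rewrite inE eqxx|].
Qed.

Definition Zs (s0 s1 : bool) : pred 'X_{1..2} :=
  fun m => (s0 ==> (m i0 == 0%N)) && (s1 ==> (m i1 == 0%N)).
Lemma ZsD s0 s1 (m1 m2 : 'X_{1..2}) : Zs s0 s1 (m1 + m2)%MM = Zs s0 s1 m1 && Zs s0 s1 m2.
Proof.
rewrite /Zs !mnmDE !addn_eq0.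
case: s0; case: s1 => /=; case: (m1 i0 == 0%N); case: (m1 i1 == 0%N); by rewrite /= ?andbT ?andbF.
Qed.
Lemma Zs0 s0 s1 : Zs s0 s1 0%MM.
Proof. by rewrite /Zs !mnm0E; case: s0; case: s1. Qed.

Section Main.
Variables (K : fieldType) (a b : seq nat).
Local Notation J := (@monideal K a b).
Hypothesis Hsz : (0 < size a)%N.
Hypothesis Hb : size b = size a.
Hypothesis Ha : forall i, (i.+1 < size a)%N -> (nth 0%N a i.+1 < nth 0%N a i)%N.
Hypothesis Hbb : forall i, (i.+1 < size a)%N -> (nth 0%N b i < nth 0%N b i.+1)%N.

Lemma amono j k : (j < k)%N -> (k < size a)%N -> (nth 0%N a k < nth 0%N a j)%N.
Proof.
elim: k => // k IH hjk hk; have := Ha hk.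
case: (ltngtP j k) => [h|h|->] //; last lia.
have := IH h (ltnW hk); lia.
Qed.
Lemma bmono j k : (j < k)%N -> (k < size a)%N -> (nth 0%N b j < nth 0%N b k)%N.
Proof.
elim: k => // k IH hjk hk; have := Hbb hk.
case: (ltngtP j k) => [h|h|->] //; last lia.
have := IH h (ltnW hk); lia.
Qed.
Lemma amono_le j k : (j <= k)%N -> (k < size a)%N -> (nth 0%N a k <= nth 0%N a j)%N.
Proof. rewrite leq_eqVlt => /orP [/eqP -> //| h] hk; exact/ltnW/amono. Qed.
Lemma bmono_le j k : (j <= k)%N -> (k < size a)%N -> (nth 0%N b j <= nth 0%N b k)%N.
Proof. rewrite leq_eqVlt => /orP [/eqP -> //| h] hk; exact/ltnW/bmono. Qed.

Lemma colonE f g : colon J f g <-> memI a b (g * f).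
Proof. by split; [apply: J_memI | apply: memI_J]. Qed.

Lemma colon_ideal f : is_ideal (colon J f).
Proof.
split; [|split].
- by rewrite /colon mul0r; apply: ig0.
- by move=> g h hg hh; rewrite /colon mulrDl; apply: igD.
- by move=> r g hg; rewrite /colon -mulrA; apply: igM.
Qed.

Lemma primeX s0 s1 e :
  (forall m, inI a b (e + m)%MM = ~~ Zs s0 s1 m) -> is_prime_ideal (colon J 'X_[e]).
Proof.
move=> hZ.
have key : forall g, colon J 'X_[e] g <-> @proj K (Zs s0 s1) g = 0.
  move=> g; rewrite colonE memIMX.
  rewrite (eq_all (a2 := fun m => ~~ Zs s0 s1 m)); last by move=> m; rewrite hZ.
  exact: iff_sym (proj0P (Zs0 s0 s1) g).
split; first exact: colon_ideal.
split; first by move/key; apply: proj1; exact: Zs0.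
move=> g h /key /(proj_prime (@ZsD s0 s1) (Zs0 s0 s1)) [] /key; by [left|right].
Qed.


Lemma existA i : (i.+1 < size a)%N -> exists e : 'X_{1..2},
  mdeg e = (nth 0%N a i + nth 0%N b i.+1 - 2)%N /\ is_prime_ideal (colon J 'X_[e]).
Proof.
move=> hi; have h1 := Ha hi; have h2 := Hbb hi.
exists (mxy (nth 0%N a i - 1) (nth 0%N b i.+1 - 1)); split.
  by rewrite mdeg2 mxy0 mxy1; lia.
apply: (@primeX true true) => m; rewrite /Zs /=.
apply/idP/idP.
  move/inIP => [k hk]; rewrite !mnmDE mxy0 mxy1 => [[k1 k2]].
  apply/negP => /andP [/eqP e0 /eqP e1]; rewrite e0 e1 in k1 k2.
  case: (leqP k i) => hki.
    have := amono_le hki (ltnW hi); lia.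
  have := bmono_le hki hk; lia.
move=> hm; apply/inIP; rewrite !mnmDE mxy0 mxy1.
case E0: (m i0 == 0%N).
  move: hm; rewrite E0 /= => E1.
  exists i.+1 => //; split; lia.
exists i; first exact: ltnW.
move/negbT: E0 => E0; split; lia.
Qed.

Lemma existB : nth 0%N b 0 != 0%N -> exists e : 'X_{1..2},
  mdeg e = (nth 0%N a 0 + nth 0%N b 0 - 1)%N /\ is_prime_ideal (colon J 'X_[e]).
Proof.
move=> hb0; exists (mxy (nth 0%N a 0) (nth 0%N b 0 - 1)); split.
  by rewrite mdeg2 mxy0 mxy1; lia.
apply: (@primeX false true) => m; rewrite /Zs /=.
apply/idP/idP.
  move/inIP => [k hk]; rewrite !mnmDE mxy0 mxy1 => [[k1 k2]].
  apply/negP => /eqP e1; rewrite e1 in k2.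
  have := bmono_le (leq0n k) hk; lia.
move=> hm; apply/inIP; rewrite !mnmDE mxy0 mxy1.
exists 0%N => //; split; lia.
Qed.

Lemma existC : nth 0%N a (size a).-1 != 0%N -> exists e : 'X_{1..2},
  mdeg e = (nth 0%N a (size a).-1 + nth 0%N b (size a).-1 - 1)%N /\ is_prime_ideal (colon J 'X_[e]).
Proof.
move=> ha0; have hn : ((size a).-1 < size a)%N by lia.
exists (mxy (nth 0%N a (size a).-1 - 1) (nth 0%N b (size a).-1)); split.
  by rewrite mdeg2 mxy0 mxy1; lia.
apply: (@primeX true false) => m; rewrite /Zs /=.
apply/idP/idP.
  move/inIP => [k hk]; rewrite !mnmDE mxy0 mxy1 => [[k1 k2]].
  rewrite andbT; apply/negP => /eqP e1; rewrite e1 in k1.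
  have : (k <= (size a).-1)%N by lia.
  move=> hk'; have := amono_le hk' hn; lia.
move=> hm; apply/inIP; rewrite !mnmDE mxy0 mxy1.
exists (size a).-1 => //; rewrite andbT in hm; split; lia.
Qed.

Lemma memA k : (k.+1 < size a)%N -> (nth 0%N a k + nth 0%N b k.+1 - 2)%N \in vcands a b.
Proof.
move=> hk; rewrite /vcands !mem_cat; apply/orP; right; apply/orP; right.
by apply/mapP; exists k => //; rewrite mem_iota; lia.
Qed.
Lemma memB : nth 0%N b 0 != 0%N -> (nth 0%N a 0 + nth 0%N b 0 - 1)%N \in vcands a b.
Proof. by move=> h; rewrite /vcands h mem_cat inE eqxx. Qed.
Lemma memC : nth 0%N a (size a).-1 != 0%N ->
  (nth 0%N a (size a).-1 + nth 0%N b (size a).-1 - 1)%N \in vcands a b.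
Proof. by move=> h; rewrite /vcands h !mem_cat inE eqxx orbT. Qed.

Lemma combA p q :
  (forall k, (k < size a)%N -> ~ (nth 0%N a k <= p /\ nth 0%N b k <= q)%N) ->
  (exists2 k, (k < size a)%N & (nth 0%N a k <= p.+1 /\ nth 0%N b k <= q)%N) ->
  (exists2 l, (l < size a)%N & (nth 0%N a l <= p /\ nth 0%N b l <= q.+1)%N) ->
  exists2 k, (k.+1 < size a)%N & (nth 0%N a k + nth 0%N b k.+1 - 2 <= p + q)%N.
Proof.
move=> hn [k hk [k1 k2]] [l hl [l1 l2]].
have ek : nth 0%N a k = p.+1.
  have := hn k hk; case: (leqP (nth 0%N a k) p) => h; last lia. by case.
have el : nth 0%N b l = q.+1.
  have := hn l hl; case: (leqP (nth 0%N b l) q) => h; last lia. by case.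
case: (leqP l k) => hlk.
  have := amono_le hlk hk; lia.
exists k; first lia.
have := bmono_le hlk hl; lia.
Qed.

Lemma combB p q :
  ~ (nth 0%N a 0 <= p + nth 0%N a 0 /\ nth 0%N b 0 <= q)%N ->
  (exists2 l, (l < size a)%N & (nth 0%N a l <= p /\ nth 0%N b l <= q.+1)%N) ->
  nth 0%N b 0 != 0%N /\ (nth 0%N a 0 + nth 0%N b 0 - 1 <= p + q)%N.
Proof.
move=> hn [l hl [l1 l2]].
have hq : (q < nth 0%N b 0)%N.
  case: (leqP (nth 0%N b 0) q) => h //; exfalso; apply: hn; split => //; lia.
case: l hl l1 l2 => [|l] hl l1 l2.
  split; [apply/eqP|]; lia.
have := bmono (ltn0Sn l) hl; lia.
Qed.

Lemma combC p q :
  ~ (nth 0%N a (size a).-1 <= p /\ nth 0%N b (size a).-1 <= q + nth 0%N b (size a).-1)%N ->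
  (exists2 k, (k < size a)%N & (nth 0%N a k <= p.+1 /\ nth 0%N b k <= q)%N) ->
  nth 0%N a (size a).-1 != 0%N /\ (nth 0%N a (size a).-1 + nth 0%N b (size a).-1 - 1 <= p + q)%N.
Proof.
move=> hn [k hk [k1 k2]]; have hn1 : ((size a).-1 < size a)%N by lia.
have hp : (p < nth 0%N a (size a).-1)%N.
  case: (leqP (nth 0%N a (size a).-1) p) => h //; exfalso; apply: hn; split => //; lia.
have : (k <= (size a).-1)%N by lia.
rewrite leq_eqVlt => /orP [/eqP ek|hk'].
  rewrite ek in k1 k2; split; [apply/eqP|]; lia.
have := amono hk' hn1; lia.
Qed.

Lemma XxyE p q : 'X_[mxy p q] = ('X_[mxy 1%N 0%N] ^+ p * 'X_[mxy 0%N 1%N] ^+ q : {mpoly K[2]}).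
Proof.
rewrite !mpolyXn -mpolyXD; congr 'X_[_].
by apply: mnm2P; rewrite mnmDE !mulmnE /mxy !mnmE /=; lia.
Qed.

Lemma lower f d : f \is d.-homog -> is_prime_ideal (colon J f) ->
  (seqmin (vcands a b) <= d)%N.
Proof.
move=> hf [_ [P1 Pm]].
have Xpow : forall X n, colon J f (X ^+ n) -> colon J f X.
  move=> X; elim=> [|n IH]; first by rewrite expr0 => /P1.
  by rewrite exprS => /Pm [].
have colX : forall e, colon J f 'X_[e] <-> all (fun u => inI a b (e + u)) (msupp f).
  by move=> e; rewrite colonE mulrC memIMX.
have hdeg : forall u, u \in msupp f -> (u i0 + u i1)%N = d.
  by move=> u hu; rewrite -mdeg2; move/dhomogP: hf; apply.
have gen0 : colon J f 'X_[mxy (nth 0%N a 0) (nth 0%N b 0)].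
  apply/colX; apply/allP => u _; apply: inI_mono; apply/inIP; exists 0%N => //.
  by rewrite mxy0 mxy1.
have hxy : colon J f 'X_[mxy 1%N 0%N] \/ colon J f 'X_[mxy 0%N 1%N].
  by move: gen0; rewrite XxyE => /Pm [] /Xpow; [left|right].
have [u hu nu] : exists2 u, u \in msupp f & ~~ inI a b u.
  have : ~~ all (fun u => inI a b (0%MM + u)) (msupp f).
    by apply/negP => /colX; rewrite mpolyX0 => /P1.
  by case/allPn => u hu; rewrite add0m => nu; exists u.
case hx: (all (fun u => inI a b (mxy 1%N 0%N + u)) (msupp f));
case hy: (all (fun u => inI a b (mxy 0%N 1%N + u)) (msupp f)).
- have [k hk hle] : exists2 k, (k.+1 < size a)%N & (nth 0%N a k + nth 0%N b k.+1 - 2 <= u i0 + u i1)%N.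
    apply: combA.
    + by move=> k hk [h1 h2]; move/negP: nu; apply; apply/inIP; exists k.
    + by move/allP: hx => /(_ u hu) /inIP [k hk]; rewrite !mnmDE mxy0 mxy1 => [[h1 h2]]; exists k => //; split; lia.
    + by move/allP: hy => /(_ u hu) /inIP [k hk]; rewrite !mnmDE mxy0 mxy1 => [[h1 h2]]; exists k => //; split; lia.
  rewrite -(hdeg u hu); apply: leq_trans hle; apply: seqmin_le; exact: memA.
- have H : ~ colon J f ('X_[mxy 0%N 1%N] ^+ nth 0%N b (size a).-1).
    by move/Xpow/colX; rewrite hy.
  have : ~~ all (fun u => inI a b (mxy 0%N 1%N *+ nth 0%N b (size a).-1 + u)) (msupp f).
    by apply/negP => /colX; rewrite -mpolyXn.
  case/allPn => w hw nw.
  have hn1 : ((size a).-1 < size a)%N by lia.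
  have [hC hle] : nth 0%N a (size a).-1 != 0%N /\ (nth 0%N a (size a).-1 + nth 0%N b (size a).-1 - 1 <= w i0 + w i1)%N.
    apply: combC.
  + move=> [h1 h2]; move/negP: nw; apply; apply/inIP; exists (size a).-1 => //.
    by rewrite !mnmDE !mulmnE mxy0 mxy1; split; lia.
  + by move/allP: hx => /(_ w hw) /inIP [k hk]; rewrite !mnmDE mxy0 mxy1 => [[h1 h2]]; exists k => //; split; lia.
  rewrite -(hdeg w hw); apply: leq_trans hle; apply: seqmin_le; exact: memC.
- have H : ~ colon J f ('X_[mxy 1%N 0%N] ^+ nth 0%N a 0).
    by move/Xpow/colX; rewrite hx.
  have : ~~ all (fun u => inI a b (mxy 1%N 0%N *+ nth 0%N a 0 + u)) (msupp f).
    by apply/negP => /colX; rewrite -mpolyXn.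
  case/allPn => w hw nw.
  have [hB hle] : nth 0%N b 0 != 0%N /\ (nth 0%N a 0 + nth 0%N b 0 - 1 <= w i0 + w i1)%N.
    apply: combB.
  + move=> [h1 h2]; move/negP: nw; apply; apply/inIP; exists 0%N => //.
    by rewrite !mnmDE !mulmnE mxy0 mxy1; split; lia.
  + by move/allP: hy => /(_ w hw) /inIP [k hk]; rewrite !mnmDE mxy0 mxy1 => [[h1 h2]]; exists k => //; split; lia.
  rewrite -(hdeg w hw); apply: leq_trans hle; apply: seqmin_le; exact: memB.
- by case: hxy => /colX; rewrite ?hx ?hy.
Qed.
End Main.

Theorem theorem5p6 (K : fieldType) (a b : seq nat) :
  (0 < size a)%N ->
  size b = size a ->
  (forall i, (i.+1 < size a)%N -> (nth 0%N a i.+1 < nth 0%N a i)%N) ->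
  (forall i, (i.+1 < size a)%N -> (nth 0%N b i < nth 0%N b i.+1)%N) ->
  ~ @monideal K a b 1%R ->
  vnumber_is (@monideal K a b) (seqmin (vcands a b)).
Proof.
move=> Hsz Hb Ha Hbb HJ1.
have hex : exists x, x \in vcands a b.
  case hB: (nth 0%N b 0 != 0%N); first by eexists; apply: memB.
  case hC: (nth 0%N a (size a).-1 != 0%N); first by eexists; apply: memC.
  case hA: (1 < size a)%N; first by exists (nth 0%N a 0 + nth 0%N b 1 - 2)%N; apply: memA.
  exfalso; apply: HJ1; apply: memI_J; rewrite -mpolyX0 /memI msuppX /= andbT.
  apply/inIP; exists 0%N => //; rewrite !mnm0E.
  have e1 : (size a).-1 = 0%N by lia.
  move/negbFE: hB => /eqP ->; move/negbFE: hC; rewrite e1 => /eqP ->; by [].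
have hne : vcands a b != [::] by case: hex => x; case: (vcands a b).
split.
- have hv := seqmin_mem hne.
  have [e [he hp]] : exists e : 'X_{1..2}, mdeg e = seqmin (vcands a b) /\
      is_prime_ideal (colon (@monideal K a b) 'X_[e]).
    move: hv; set v := seqmin _; rewrite {1}/vcands !mem_cat => /orP [|/orP []].
    + case: ifP => // hB; rewrite inE => /eqP ->; exact: existB.
    + case: ifP => // hC; rewrite inE => /eqP ->; exact: existC.
    + case/mapP => i; rewrite mem_iota => hi ->; apply: existA => //; lia.
  exists 'X_[e]; split.
    by rewrite dhomogE msuppX /= he eqxx.
  by split => //; exists 'X_[e].
- move=> d f hf [hp _]; exact: lower hf hp.
Qed.
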